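(* Let $n\ge2$, $h\ge1$, $0\le l\le (n-1)h$ be integers, $N=nh$, and let $\mathcal{F}=\{p_1,\dots,p_N\}$. For $i=1,\dots,n$ let $B_i=\{p_{(i-1)h+1},\dots,p_{ih}\}$, let $R_i$ be a uniformly random $l$-element subset of $\mathcal{F}\setminus B_i$, the $R_i$ chosen independently, and let $G_i=B_i\cup R_i$, $g=h+l$. Let $\pi=\frac{l}{(n-1)h}$ and $\bar\pi=1-\pi$. Then for any $I\subset\{1,\dots,n\}$ with $|I|=s$ and any $j\in\{1,\dots,n\}\setminus I$, \[ \Omega(s):=E\Bigl[\Bigl|\Bigl(\bigcup_{i\in I}G_i\Bigr)\cap G_j\Bigr|\Bigr]=g\bigl[1-\bar\pi^s\bigr]+sh\,\pi\,\bar\pi^s . \] Moreover, when $n\to\infty$ with $l/h\to\alpha$ and $s/n\to\beta$, writing $\omega(\beta)=\Omega(s)$, one has $\omega(\beta)\to h\bigl[(1+\alpha)(1-e^{-\alpha\beta})+\alpha\beta e^{-\alpha\beta}\bigr]$.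
   Context: This describes the ''random annex code'': $B_i$ are base generations, $R_i$ random annexes, $G_i$ extended generations. *)

(* Defs.v *)
From HB Require Import structures.
From mathcomp Require Import all_boot all_order all_algebra.
From mathcomp Require Import all_classical all_reals all_analysis.
Set Implicit Arguments. Unset Strict Implicit. Unset Printing Implicit Defensive.
Import Order.TTheory GRing.Theory Num.Theory.
Local Open Scope ring_scope.

(* Points p_1..p_N are 'I_(n*h) (0-indexed); generations i : 'I_n (0-indexed). *)
(* Base generation B_i = {p : p %/ h = i}, i.e. p_{(i-1)h+1},...,p_{ih}. *)
Definition block (n h : nat) (i : 'I_n) : {set 'I_(n * h)} :=
  [set p : 'I_(n * h) | (p %/ h)%N == i].

(* The sample space: families (R_i)_i of l-subsets R_i of F \ B_i.
   Independent uniform choices = uniform distribution on this finite set. *)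
Definition annexes (n h l : nat) : {set {ffun 'I_n -> {set 'I_(n * h)}}} :=
  [set Rf : {ffun 'I_n -> {set 'I_(n * h)}} | [forall i : 'I_n, (Rf i \subset ~: block h i) && (#|Rf i| == l)]].

Definition ext_gen (n h : nat) (Rf : {ffun 'I_n -> {set 'I_(n * h)}}) (i : 'I_n)
  : {set 'I_(n * h)} := block h i :|: Rf i.

Definition Omega (R : realType) (n h l : nat) (I : {set 'I_n}) (j : 'I_n) : R :=
  (\sum_(Rf in annexes n h l)
      (#|(\bigcup_(i in I) ext_gen Rf i) :&: ext_gen Rf j|)%:R)
  / (#|annexes n h l|)%:R.

(* Main.v *)
Require Import Defs.
From HB Require Import structures.
From mathcomp Require Import all_boot all_order all_algebra.
From mathcomp Require Import all_classical all_reals all_analysis.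
From mathcomp Require Import zify ring lra.
Import Order.TTheory GRing.Theory Num.Theory.
Import numFieldNormedType.Exports.
Local Open Scope ring_scope.

Set Implicit Arguments. Unset Strict Implicit.

Lemma sum_div_blocks (V : nmodType) (n h : nat) (F : nat -> V) : (0 < h)%N ->
  \sum_(p < n * h) F (p %/ h)%N = (\sum_(k < n) F k) *+ h.
Proof.
move=> hp; rewrite -(big_mkord xpredT F) -(big_mkord xpredT (fun p => F (p %/ h)%N)) /=.
elim: n => [|n IH]; first by rewrite mul0n !big_geq // mul0rn.
rewrite mulSnr.
rewrite (big_cat_nat (n:=n*h)) //=; last by rewrite leq_addr.
rewrite IH big_nat_recr //= mulrnDl.
congr (_ + _).
rewrite (eq_big_nat _ _ (F2 := fun _ => F n)); last first.
  move=> p /andP[h1 h2]. congr F. 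
  have -> : p = (n * h + (p - n * h))%N by lia.
  rewrite divnMDl // divn_small; lia.
by rewrite sumr_const_nat addnC addnK.
Qed.

Lemma sum_eq1 (V : zmodType) n (i : 'I_n) (x : V) :
  \sum_(k < n) (if (k == i :> nat) then x else 0) = x.
Proof.
rewrite (bigD1 i) //= eqxx big1 ?addr0 // => k /negbTE; by rewrite -val_eqE /= => ->.
Qed.

Lemma card_block n h (i : 'I_n) : (0 < h)%N -> #|block h i| = h.
Proof.
move=> hp.
have : (#|block h i|%:R : int) = h%:R.
  rewrite -sumr_const big_mkcond /=.
  rewrite (eq_bigr (fun p : 'I_(n*h) => (fun k => if k == i :> nat then 1 else 0) (p %/ h)%N)); last first.
    by move=> p _; rewrite inE.
  by apply: etrans (@sum_div_blocks _ n h (fun k => if k == i :> nat then 1 else 0) hp) _; rewrite sum_eq1.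
by move/eqP; rewrite eqr_nat => /eqP.
Qed.

Definition Dset n h l (i : 'I_n) (E : pred {set 'I_(n*h)}) : {set {set 'I_(n*h)}} :=
  [set S : {set 'I_(n*h)} | (S \subset ~: block h i) && (#|S| == l) && E S].
Arguments Dset {n} h l i E.

Lemma cardD n h l (i : 'I_n) : (0 < h)%N ->
  #|Dset h l i xpredT| = 'C(n*h - h, l).
Proof.
move=> hp; have -> : (n * h - h)%N = #|~: block h i|.
  by move: (cardsC (block h i)); rewrite card_ord card_block //; lia.
rewrite -cards_draws.
by apply: eq_card => S; rewrite !inE andbT.
Qed.

Lemma cardmiss n h l (i : 'I_n) (p : 'I_(n*h)) : (0 < h)%N ->
  #|Dset h l i (fun S => p \notin block h i :|: S)| =
    if p \in block h i then 0%N else 'C(n*h - h - 1, l).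
Proof.
move=> hp; case: ifP => pB.
  by apply: eq_card0 => S; rewrite inE finset.in_setU pB andbF.
have -> : (n * h - h - 1)%N = #|~: block h i :\ p|.
  move: (cardsD1 p (~: block h i)) (cardsC (block h i)); rewrite inE pB /= card_ord card_block //.
  move: #|~: block h i :\ p| #|~: block h i| => X Y; lia.
rewrite -cards_draws; apply: eq_card => S; rewrite inE finset.in_setU pB /= inE.
apply/idP/idP.
  case/andP => /andP[sub ->] pS; rewrite andbT.
  apply/fintype.subsetP => x xS; rewrite !inE. move/fintype.subsetP: sub => /(_ x xS). rewrite !inE => ->.
  by rewrite andbT; apply/eqP => e; move: pS; rewrite -e xS.
case/andP => sub ->; rewrite andbT; apply/andP; split.
  by apply: fintype.subset_trans sub _; apply/fintype.subsetP => x; rewrite !inE => /andP[].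
by apply/negP => pS; move/fintype.subsetP: sub => /(_ p pS); rewrite !inE eqxx.
Qed.

Lemma card_ev n h l (E : 'I_n -> pred {set 'I_(n*h)}) :
  #|[set Rf in annexes n h l | [forall i, E i (Rf i)]]| =
  \prod_(i < n) #|Dset h l i (E i)|.
Proof.
pose F := fun i : 'I_n => [pred S : {set 'I_(n*h)} | (S \subset ~: block h i) && (#|S| == l) && E i S].
have -> : [set Rf in annexes n h l | [forall i, E i (Rf i)]] = [set Rf : {ffun 'I_n -> {set 'I_(n*h)}} in family F].
  apply/setP => Rf; rewrite !inE; apply/andP/familyP => [[/forallP H1 /forallP H2] i|H].
    by rewrite /F inE H1 H2.
  by split; apply/forallP => i; have := H i; rewrite /F inE => /andP[].
rewrite cardsE card_family foldrE big_map big_enum /=.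
by apply: eq_bigr => i _; rewrite cardsE.
Qed.

Definition rt (R : numFieldType) n h l (i : 'I_n) (E : pred {set 'I_(n*h)}) : R :=
  (#|Dset h l i E|)%:R / (#|Dset h l i xpredT|)%:R.
Arguments rt R {n} h l i E.

Lemma ev_ratio (R : numFieldType) n h l (E : 'I_n -> pred {set 'I_(n*h)}) :
  (0 < h)%N -> (l <= n * h - h)%N ->
  (#|[set Rf in annexes n h l | [forall i, E i (Rf i)]]|)%:R / (#|annexes n h l|)%:R
   = \prod_(i < n) rt R h l i (E i).
Proof.
move=> hp hl.
have -> : #|annexes n h l| = #|[set Rf in annexes n h l | [forall i, xpredT (Rf i)]]|.
  apply: eq_card => Rf; rewrite [in RHS]inE. have -> : [forall i, xpredT (Rf i)] by apply/forallP. by rewrite andbT.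
rewrite card_ev (@card_ev n h l (fun _ => xpredT)) !natr_prod -prodf_div; apply: eq_bigr => i _.
by rewrite /rt.
Qed.

Lemma rt_true (R : numFieldType) n h l (i : 'I_n) :
  (0 < h)%N -> (l <= n * h - h)%N -> rt R h l i xpredT = 1.
Proof.
move=> hp hl; rewrite /rt divff // pnatr_eq0 cardD // -lt0n bin_gt0 //.
Qed.

Lemma Dset_split n h l (i : 'I_n) (E : pred {set 'I_(n*h)}) :
  (#|Dset h l i E| + #|Dset h l i (fun S => ~~ E S)|)%N = #|Dset h l i xpredT|.
Proof.
rewrite -(cardsID [set S | E S] (Dset h l i xpredT)); congr (_ + _)%N; apply: eq_card => S;
  rewrite !inE; by case: (E S); rewrite ?andbT ?andbF.
Qed.

Definition qq (R : numFieldType) n h l : R := 'C(n*h - h - 1, l)%:R / 'C(n*h - h, l)%:R.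

Lemma rt_miss (R : numFieldType) n h l (i : 'I_n) (p : 'I_(n*h)) :
  (0 < h)%N -> rt R h l i (fun S => p \notin block h i :|: S) =
   if p \in block h i then 0 else qq R n h l.
Proof.
move=> hp; rewrite /rt cardmiss // cardD //; case: ifP => _ //; by rewrite mul0r.
Qed.

Lemma rt_hit (R : numFieldType) n h l (i : 'I_n) (p : 'I_(n*h)) :
  (0 < h)%N -> (l <= n * h - h)%N -> rt R h l i (fun S => p \in block h i :|: S) =
   if p \in block h i then 1 else 1 - qq R n h l.
Proof.
move=> hp hl.
have e := Dset_split l i (fun S => p \in block h i :|: S).
have nz : (#|Dset h l i xpredT|%:R : R) != 0.
  by rewrite pnatr_eq0 cardD // -lt0n bin_gt0.
have -> : rt R h l i (fun S => p \in block h i :|: S) = 1 - rt R h l i (fun S => p \notin block h i :|: S).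
  rewrite /rt; move: nz; rewrite -e natrD => nz; field.
  done.
rewrite rt_miss //; case: ifP => _; by rewrite ?subr0.
Qed.

Lemma card_natr (R : numFieldType) (T : finType) (B : {set T}) :
  (#|B|%:R : R) = \sum_x (x \in B)%:R.
Proof.
rewrite -sumr_const big_mkcond; apply: eq_bigr => x _; by case: (x \in B).
Qed.

Lemma rt_ext (R : numFieldType) n h l (i : 'I_n) (E E' : pred {set 'I_(n*h)}) :
  (forall S, E S = E' S) -> rt R h l i E = rt R h l i E'.
Proof.
move=> e; rewrite /rt; congr (_%:R / _); apply: eq_card => S; by rewrite !inE e.
Qed.

Definition OmegaG (R : numFieldType) (n h l : nat) (I : {set 'I_n}) (j : 'I_n) : R :=
  (\sum_(Rf in annexes n h l)
      (#|(\bigcup_(i in I) ext_gen Rf i) :&: ext_gen Rf j|)%:R)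
  / (#|annexes n h l|)%:R.

Definition hitv (R : numFieldType) n h l (i : 'I_n) (p : 'I_(n*h)) : R :=
  if p \in block h i then 1 else 1 - qq R n h l.
Definition missv (R : numFieldType) n h l (i : 'I_n) (p : 'I_(n*h)) : R :=
  if p \in block h i then 0 else qq R n h l.

Lemma OmegaG_sum (R : numFieldType) n h l (I : {set 'I_n}) (j : 'I_n) :
  (0 < h)%N -> (l <= n * h - h)%N -> j \notin I ->
  OmegaG R h l I j = \sum_(p : 'I_(n*h)) (hitv R l j p - hitv R l j p * \prod_(i in I) missv R l i p).
Proof.
move=> hp hl jI.
pose X (Rf : {ffun 'I_n -> {set 'I_(n*h)}}) := (\bigcup_(i in I) ext_gen Rf i) :&: ext_gen Rf j.
pose E1 (p : 'I_(n*h)) (i : 'I_n) (S : {set 'I_(n*h)}) := (i != j) || (p \in block h i :|: S).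
pose E2 (p : 'I_(n*h)) (i : 'I_n) (S : {set 'I_(n*h)}) :=
  ((i != j) || (p \in block h i :|: S)) && ((i \notin I) || (p \notin block h i :|: S)).
pose A := annexes n h l.
have stepA : \sum_(Rf in A) (#|X Rf|)%:R = \sum_p (#|[set Rf in A | p \in X Rf]|%:R : R).
  under eq_bigr do rewrite card_natr.
  rewrite exchange_big /=; apply: eq_bigr => p _.
  rewrite card_natr big_mkcond /=; apply: eq_bigr => Rf _; rewrite [in RHS]inE.
  by case: (Rf \in A).
have hE1 p (Rf : {ffun 'I_n -> {set 'I_(n*h)}}) : [forall i, E1 p i (Rf i)] = (p \in ext_gen Rf j).
  apply/forallP/idP => [/(_ j)|H i]; first by rewrite /E1 eqxx.
  rewrite /E1; case: eqP => [->|] //=.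
have hE2 p (Rf : {ffun 'I_n -> {set 'I_(n*h)}}) : [forall i, E2 p i (Rf i)] = (p \in ext_gen Rf j) && (p \notin \bigcup_(i in I) ext_gen Rf i).
  apply/forallP/andP => [H|[H1 H2] i].
    split; first by have := H j; rewrite /E2 eqxx (negbTE jI) /= andbT.
    apply/bigcupP => -[i iI]; have := H i; rewrite /E2 iI /= => /andP[_ /negP]; apply.
  rewrite /E2; case: eqP => [->|_] /=; first by rewrite H1 jI.
  case: (boolP (i \in I)) => //= iI; apply/negP => pi; move/negP: H2; apply; apply/bigcupP; by exists i.
have stepB p : #|[set Rf in A | [forall i, E1 p i (Rf i)]]| =
    (#|[set Rf in A | p \in X Rf]| + #|[set Rf in A | [forall i, E2 p i (Rf i)]]|)%N.
  rewrite -(cardsID [set Rf | p \in X Rf]); congr (_ + _)%N; apply: eq_card => Rf; 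
    rewrite !inE hE1 ?hE2 !inE;
    by case: [forall _, _]; case: (_ \in \bigcup_(_ in _) _); case: (_ == _); case: (_ \in Rf j).
rewrite /OmegaG -/A stepA mulr_suml; apply: eq_bigr => p _.
have e : (#|[set Rf in A | p \in X Rf]|%:R : R) =
   #|[set Rf in A | [forall i, E1 p i (Rf i)]]|%:R - #|[set Rf in A | [forall i, E2 p i (Rf i)]]|%:R.
  by rewrite stepB natrD addrK.
rewrite e mulrBl !ev_ratio //.
have hj : rt R h l j (E1 p j) = hitv R l j p.
  rewrite (@rt_ext _ _ _ _ _ _ (fun S => p \in block h j :|: S)); last by move=> S; rewrite /E1 eqxx.
  by rewrite rt_hit.
congr (_ - _).
  rewrite (bigD1 j) //= hj big1 ?mulr1 // => i ij.
  rewrite (@rt_ext _ _ _ _ _ _ xpredT) ?rt_true // => S; by rewrite /E1 ij.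
rewrite (bigD1 j) //=.
rewrite (@rt_ext _ _ _ _ _ (E2 p j) (E1 p j)); last by move=> S; rewrite /E2 /E1 (negbTE jI) andbT.
rewrite hj; congr (_ * _).
rewrite [RHS]big_mkcond [LHS]big_mkcond /=; apply: eq_bigr => i _.
case: eqP => [->|/eqP ij]; first by rewrite (negbTE jI).
case: (boolP (i \in I)) => iI /=.
  rewrite (@rt_ext _ _ _ _ _ _ (fun S => p \notin block h i :|: S)) ?rt_miss // => S.
  by rewrite /E2 ij iI.
rewrite (@rt_ext _ _ _ _ _ _ xpredT) ?rt_true // => S; by rewrite /E2 ij (negbTE iI).
Qed.


Lemma sumF (R : numFieldType) n (I : {set 'I_n}) (j : 'I_n) (q : R) : j \notin I ->
  \sum_(k < n) ((if k == j :> nat then 1 else 1 - q)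
      - (if k == j :> nat then 1 else 1 - q) * \prod_(i in I) (if k == i :> nat then 0 else q))
  = 1 + (1 - q) * (n - 1)%:R - q ^+ #|I| - (1 - q) * q ^+ #|I| * (n - 1 - #|I|)%:R.
Proof.
move=> jI.
have hP (k : 'I_n) : \prod_(i in I) (if k == i :> nat then 0 else q) = if k \in I then 0 else q ^+ #|I|.
  case: (boolP (k \in I)) => kI.
    by rewrite (bigD1 k) //= eqxx mul0r.
  rewrite -prodr_const; apply: eq_bigr => i iI; case: eqP => // /val_inj e.
  by move: kI; rewrite e iI.
under eq_bigr do rewrite hP.
rewrite (bigD1 j) //= eqxx (negbTE jI) mul1r.
under eq_bigr => k kj do rewrite val_eqE (negbTE kj).
rewrite sumrB sumr_const -big_distrr /=.
have c1 : #|[pred k : 'I_n | k != j]| = (n - 1)%N.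
  by rewrite cardC1 card_ord subn1.
rewrite c1.
have -> : \sum_(k < n | k != j) (if k \in I then 0 else q ^+ #|I|) = q ^+ #|I| *+ (n - 1 - #|I|).
  rewrite (bigID (fun k => k \in I)) /= big1 ?add0r; last by move=> k /andP[_ ->].
  rewrite (eq_bigr (fun _ => q ^+ #|I|)); last by move=> k /andP[_ /negbTE ->].
  rewrite sumr_const; congr (_ *+ _).
  have -> : #|[pred k : 'I_n | (k != j) && (k \notin I)]| = #|~: (j |: I)|.
    by apply: eq_card => k; rewrite !inE negb_or.
  move: (cardsC (j |: I)); rewrite cardsU1 jI card_ord.
  move: #|~: _| #|I| => X Y; rewrite [nat_of_bool true]/= add1n; lia.
rewrite -mulr_natr -[(1 - q) *+ _]mulr_natr.
ring.
Qed.

Unset Implicit Arguments.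
Local Open Scope classical_set_scope.
Local Open Scope ring_scope.

Lemma part1 (R : realType) (n h l : nat) (I : {set 'I_n}) (j : 'I_n) :
     (2 <= n)%N -> (1 <= h)%N -> (l <= (n - 1) * h)%N -> j \notin I ->
     let pi : R := l%:R / ((n - 1) * h)%:R in
     Omega R h l I j =
       (h + l)%:R * (1 - (1 - pi) ^+ #|I|)
       + (#|I| * h)%:R * pi * (1 - pi) ^+ #|I|.
Proof.
move=> n2 hp hl jI pi.
have em : (n * h - h)%N = ((n - 1) * h)%N by rewrite mulnBl mul1n.
have hl' : (l <= n * h - h)%N by rewrite em.
have -> : Omega R h l I j = OmegaG R h l I j by [].
rewrite OmegaG_sum //.
pose F (k : nat) : R := (if k == j then 1 else 1 - qq R n h l)
      - (if k == j then 1 else 1 - qq R n h l) * \prod_(i in I) (if k == i then 0 else qq R n h l).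
rewrite (eq_bigr (fun p : 'I_(n*h) => F (p %/ h)%N)); last first.
  move=> p _; rewrite /F /hitv /missv inE; congr (_ - _ * _); apply: eq_bigr => i _.
  by rewrite inE.
rewrite sum_div_blocks // sumF //.
have mpos : (0 < (n - 1) * h)%N by rewrite muln_gt0 hp andbT; lia.
have hq : qq R n h l = 1 - pi.
  rewrite /qq /pi em.
  have e : ((n - 1) * h * 'C((n - 1) * h - 1, l) = ((n - 1) * h - l) * 'C((n - 1) * h, l))%N.
    by rewrite [((n - 1) * h - 1)%N]subn1 mul_bin_down.
  have nzC : ('C((n - 1) * h, l)%:R : R) != 0 by rewrite pnatr_eq0 -lt0n bin_gt0.
  have nzm : (((n - 1) * h)%:R : R) != 0 by rewrite pnatr_eq0 -lt0n.
  have nzh : (h%:R : R) != 0 by rewrite pnatr_eq0 -lt0n.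
  have nzn : ((n - 1)%:R : R) != 0 by rewrite pnatr_eq0 -lt0n; lia.
  have eR : ((((n - 1) * h)%N)%:R * ('C((n - 1) * h - 1, l))%:R : R) = ((((n - 1) * h)%N)%:R - l%:R) * ('C((n - 1) * h, l))%:R.
    by rewrite -natrB // -!natrM e.
  have -> : (('C((n - 1) * h - 1, l))%:R : R) = ((((n - 1) * h)%N)%:R - l%:R) * ('C((n - 1) * h, l))%:R / (((n - 1) * h)%N)%:R.
    by apply: (mulfI nzm); rewrite eR; field; rewrite nzh nzn.
  by field; rewrite ?nzh ?nzn ?nzC.
rewrite hq.
have sI : (#|I| <= n - 1)%N.
  move: (max_card (j |: I)); rewrite cardsU1 jI card_ord; move: #|I| => X; rewrite [nat_of_bool true]/= add1n; lia.
have hL : (l%:R : R) = pi * ((n - 1) * h)%:R.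
  by rewrite /pi divfK // pnatr_eq0 -lt0n.
rewrite natrD natrM hL !natrM natrB //; last by lia.
move: (_ ^+ #|I|) => t.
rewrite (natrB _ sI) natrB //; last by lia.
rewrite -[_ *+ h]mulr_natr.
ring.
Qed.


Lemma pow_cvg (R : realType) (p : nat -> R) (s : nat -> nat) (c : R) :
  (forall k, 0 <= p k <= 1) -> p @ \oo --> 0 ->
  (fun k => (s k)%:R * p k) @ \oo --> c ->
  (fun k => (1 - p k) ^+ s k) @ \oo --> expR (- c).
Proof.
move=> p01 p0 sc.
have hB : (1 - p k) @[k --> \oo] --> (1:R).
  by have := cvgB (cvg_cst (1:R)) p0; rewrite subr0 => H; exact: H.
have h1 : (1 - p k)^-1 @[k --> \oo] --> (1:R).
  by have := cvgV (oner_neq0 R) hB; rewrite invr1 => H; exact: H.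
have h2 : (s k)%:R * p k / (1 - p k) @[k --> \oo] --> c.
  by have := cvgM sc h1; rewrite mulr1 => H; exact: H.
apply: (@squeeze_cvgr _ _ _ _ (fun k => expR (- ((s k)%:R * p k / (1 - p k))))
          (fun k => expR (- ((s k)%:R * p k)))).
- near=> k.
  have pl1 : p k < 1 by near: k; exact: (cvgr_lt 0 p0 1 ltr01).
  have /andP[pk0 pk1] := p01 k.
  apply/andP; split.
  + rewrite -mulrA -mulrN expRM_natl lerXn2r ?nnegrE ?expR_ge0 ?subr_ge0 //.
    rewrite expRN -[leRHS]invrK lef_pV2 ?posrE ?expR_gt0 ?invr_gt0 ?subr_gt0 //.
    have e : 1 + p k / (1 - p k) = (1 - p k)^-1.
      by field; rewrite subr_eq0; apply/eqP => e1; move: pl1; rewrite -e1 ltxx.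
    by rewrite -[leLHS]e; exact: expR_ge1Dx.
  + rewrite -mulrN expRM_natl lerXn2r ?nnegrE ?expR_ge0 ?subr_ge0 //.
    have := expR_ge1Dx (- p k); by rewrite addrC.
- exact: (continuous_cvg _ (@continuous_expR R _) (cvgN h2)).
- exact: (continuous_cvg _ (@continuous_expR R _) (cvgN sc)).
Unshelve. all: by end_near.
Qed.

Lemma part2 (R : realType) (alpha beta : R) (n h l : nat -> nat)
          (I : forall k, {set 'I_(n k)}) (j : forall k, 'I_(n k)) :
     (forall k, [/\ (2 <= n k)%N, (1 <= h k)%N,
                    (l k <= (n k - 1) * h k)%N & j k \notin I k]) ->
     ((n k)%:R : R) @[k --> \oo] --> +oo ->
     ((l k)%:R / (h k)%:R : R) @[k --> \oo] --> alpha ->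
     ((#|I k|)%:R / (n k)%:R : R) @[k --> \oo] --> beta ->
     (Omega R (h k) (l k) (I k) (j k) / (h k)%:R) @[k --> \oo] -->
       (1 + alpha) * (1 - expR (- (alpha * beta)))
       + alpha * beta * expR (- (alpha * beta)).
Proof.
move=> H hn hx hb.
have nz k : [/\ ((n k)%:R : R) != 1, ((n k)%:R : R) != 0, ((h k)%:R : R) != 0 & ((n k)%:R - 1 : R) != 0].
  have [n2 h1 _ _] := H k.
  split; rewrite ?subr_eq0 ?pnatr_eq1 ?pnatr_eq0; lia.
pose N k : R := (n k)%:R.
pose x k : R := (l k)%:R / (h k)%:R.
pose p k : R := (l k)%:R / ((n k - 1) * h k)%:R.
pose S k : R := (#|I k|)%:R.
have hN1 : (N k - 1) @[k --> \oo] --> +oo.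
  apply/cvgryPge => A; move/cvgryPge: hn => /(_ (A + 1)); apply: filterS => k /=.
  rewrite /N; lra.
have hinv : (N k - 1)^-1 @[k --> \oo] --> (0:R).
  apply/gtr0_cvgV0 => //; apply: nearW => k; rewrite /N.
  have [n2 _ _ _] := H k; rewrite subr_gt0 ltr1n //.
have ep k : p k = x k * (N k - 1)^-1.
  have [n2 h1 _ _] := H k.
  rewrite /p /x /N natrM natrB; last by lia.
  have [? ? ? ?] := nz k; field; by rewrite ?[_ != _]andbT; apply/andP.
have hp0 : p k @[k --> \oo] --> (0:R).
  under eq_fun do rewrite ep.
  by have := cvgM hx hinv; rewrite mulr0 => K; exact: K.
have eS k : S k * p k = S k / N k * x k * (1 + (N k - 1)^-1).
  have [n2 h1 _ _] := H k.
  rewrite ep /N.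
  have [? ? ? ?] := nz k; rewrite /S; field; by rewrite ?[_ != _]andbT; apply/andP.
have hSp : S k * p k @[k --> \oo] --> alpha * beta.
  under eq_fun do rewrite eS.
  have K1 : (1 + (N k - 1)^-1) @[k --> \oo] --> (1 + 0 : R).
    by apply: cvgD => //; exact: cvg_cst.
  have K2 : (S k / N k * x k) @[k --> \oo] --> beta * alpha by apply: cvgM.
  by have := cvgM K2 K1; rewrite addr0 mulr1 mulrC => K; exact: K.
have p01 k : 0 <= p k <= 1.
  have [n2 h1 hl _] := H k.
  rewrite /p divr_ge0 ?ler0n //= ler_pdivrMr ?mul1r ?ler_nat // ltr0n muln_gt0 h1 andbT.
  lia.
have hT := @pow_cvg R p (fun k => #|I k|) (alpha * beta) p01 hp0 hSp.
have key : ((1 + x k) * (1 - (1 - p k) ^+ #|I k|) + S k * p k * (1 - p k) ^+ #|I k|) @[k --> \oo] -->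
     (1 + alpha) * (1 - expR (- (alpha * beta))) + alpha * beta * expR (- (alpha * beta)).
  apply: cvgD; apply: cvgM => //.
  - exact: cvgD (cvg_cst (1:R)) hx.
  - exact: cvgB (cvg_cst (1:R)) hT.
suff -> : (fun k => Omega R (h k) (l k) (I k) (j k) / (h k)%:R) =
  (fun k => (1 + x k) * (1 - (1 - p k) ^+ #|I k|) + S k * p k * (1 - p k) ^+ #|I k|) by exact: key.
apply/funext => k.
have [n2 h1 hl jI] := H k.
have e := part1 R (n k) (h k) (l k) (I k) (j k) n2 h1 hl jI; rewrite /= in e; rewrite e /x /S /p.
rewrite natrD natrM.
move: (_ ^+ _) => t.
field; rewrite pnatr_eq0 -lt0n h1 /= pnatr_eq0; lia.
Qed.

Local Open Scope classical_set_scope.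
Local Open Scope ring_scope.

Theorem theorem7 (R : realType) :
  (forall (n h l : nat) (I : {set 'I_n}) (j : 'I_n),
     (2 <= n)%N -> (1 <= h)%N -> (l <= (n - 1) * h)%N -> j \notin I ->
     let pi : R := l%:R / ((n - 1) * h)%:R in
     Omega R h l I j =
       (h + l)%:R * (1 - (1 - pi) ^+ #|I|)
       + (#|I| * h)%:R * pi * (1 - pi) ^+ #|I|)
  /\
  (forall (alpha beta : R) (n h l : nat -> nat)
          (I : forall k, {set 'I_(n k)}) (j : forall k, 'I_(n k)),
     (forall k, [/\ (2 <= n k)%N, (1 <= h k)%N,
                    (l k <= (n k - 1) * h k)%N & j k \notin I k]) ->
     ((n k)%:R : R) @[k --> \oo] --> +oo ->
     ((l k)%:R / (h k)%:R : R) @[k --> \oo] --> alpha ->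
     ((#|I k|)%:R / (n k)%:R : R) @[k --> \oo] --> beta ->
     (Omega R (h k) (l k) (I k) (j k) / (h k)%:R) @[k --> \oo] -->
       (1 + alpha) * (1 - expR (- (alpha * beta)))
       + alpha * beta * expR (- (alpha * beta))).
Proof.
split.
- move=> n h l I j n2 h1 hl jI; exact: part1.
- exact: part2.
Qed.
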